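(* Let $m_1\ge1$, $m_2\ge0$, and let $F_i:[0,\infty)^{m_1}\to\mathbb{R}$, $G_i:[0,\infty)^{m_1+m_2}\to\mathbb{R}$ ($i=1,\dots,m_1$), $H_j:[0,\infty)^{m_1+m_2}\to\mathbb{R}$ ($j=1,\dots,m_2$). Assume there exist an $(m_1+m_2)\times(m_1+m_2)$ lower triangular matrix $A=(a_{kl})$ with nonnegative entries and diagonal entries $1$, exponents $p_\Omega,p_M,\mu_M$ and a constant $L_2\ge0$ such that for all $u\in[0,\infty)^{m_1},v\in[0,\infty)^{m_2}$: for every $k$, $\sum_{l\le m_1}a_{kl}F_l(u)\le L_2(\sum_iu_i^{p_\Omega}+1)$; for $k\le m_1$, $\sum_{l\le m_1}a_{kl}G_l(u,v)\le L_2(\sum_iu_i^{p_M}+\sum_jv_j^{p_M}+1)$; for $k>m_1$, $\sum_{l\le m_1}a_{kl}G_l(u,v)+\sum_{l\le m_2}a_{k,m_1+l}H_l(u,v)\le L_2(\sum_iu_i^{\mu_M}+\sum_jv_j^{\mu_M}+1)$. Then there exist componentwise increasing functions $g_j:\mathbb{R}^{m_1-j}\to\mathbb{R}$, $j=1,\dots,m_1-1$, such that whenever $\ell\in(0,\infty)^{m_1}$ satisfies $\ell_j>g_j(\ell_{j+1},\dots,\ell_{m_1})$ for $j=1,\dots,m_1-1$, there exists $L_\ell>0$ with $$\sum_{i=1}^{m_1}\ell_iF_i(u)\le L_\ell\Big(\sum_{i=1}^{m_1}u_i^{p_\Omega}+1\Big)\ \ \forall u\in[0,\infty)^{m_1},\qquad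 \sum_{i=1}^{m_1}\ell_iG_i(u,v)\le L_\ell\Big(\sum_{i=1}^{m_1}u_i^{p_M}+\sum_{j=1}^{m_2}v_j^{p_M}+1\Big)\ \ \forall u,v\ge0.$$ *)

(* Defs.v *)
From HB Require Import structures.
From mathcomp Require Import all_boot all_order all_algebra.
From mathcomp Require Import all_classical all_reals all_analysis.
Set Implicit Arguments. Unset Strict Implicit. Unset Printing Implicit Defensive.
Import Order.TTheory GRing.Theory Num.Theory.
Local Open Scope ring_scope.

Definition admissible_mx (R : realType) (n : nat) (A : 'M[R]_n) : Prop :=
  (forall k l : 'I_n, (k < l)%N -> A k l = 0) /\
  (forall k l : 'I_n, 0 <= A k l) /\
  (forall k : 'I_n, A k k = 1).

Definition sumpow (R : realType) (n : nat) (x : 'I_n -> R) (p : R) : R :=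
  \sum_(i < n) (x i) `^ p.

Definition comp_incr (R : realType) (n : nat) (f : ('I_n -> R) -> R) : Prop :=
  forall x y : 'I_n -> R, (forall k, x k <= y k) -> f x <= f y.

(* Main.v *)
Require Import Defs.
From HB Require Import structures.
From mathcomp Require Import all_boot all_order all_algebra.
From mathcomp Require Import all_classical all_reals all_analysis.
From mathcomp Require Import zify.
Import Order.TTheory GRing.Theory Num.Theory.
Local Open Scope ring_scope.

Lemma comb_bound (R : realFieldType) n (B : 'M[R]_n) (c ell Phi : 'I_n -> R) (K : R) :
  (forall l, ell l = \sum_k c k * B k l) -> (forall k, 0 <= c k) ->
  (forall k, \sum_l B k l * Phi l <= K) -> \sum_i ell i * Phi i <= (\sum_k c k) * K.
Proof.
move=> He Hc HK.
have -> : \sum_i ell i * Phi i = \sum_k c k * \sum_i B k i * Phi i.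
  under eq_bigr => i _ do rewrite He mulr_suml.
  rewrite exchange_big /=; apply: eq_bigr => k _; rewrite mulr_sumr.
  by apply: eq_bigr => i _; rewrite mulrA.
rewrite mulr_suml; apply: ler_sum => k _; exact: ler_wpM2l.
Qed.
Arguments comb_bound {R n B c ell Phi K}.


Lemma sum_gt_reindex (R : realFieldType) m (j : nat) (h : 'I_m.+1 -> R) : (j < m)%N ->
  \sum_(k < m.+1 | (j < k)%N) h k = \sum_(i < m - j) h (inord (j.+1 + i)).
Proof.
move=> Hj.
pose h' := fun k : nat => h (inord k).
transitivity (\sum_(k < m.+1 | (j < k)%N) h' k).
  by apply: eq_bigr => k _; rewrite /h' inord_val.
rewrite -big_mkord (big_cat_nat _ (n:=j.+1)) //=; last by lia.
rewrite big_nat_cond big1 ?add0r; last by move=> k /andP[/andP[_ Hk] Hjk]; lia.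
rewrite big_nat_cond.
transitivity (\sum_(j.+1 <= k < m.+1) h' k).
  rewrite [in RHS]big_nat_cond; apply: eq_bigl => k.
  by case: (j.+1 <= k)%N / leqP => //= ?; rewrite andbT.
rewrite -{1}(add0n j.+1) big_addn subSS big_mkord.
by apply: eq_bigr => i _; rewrite addnC.
Qed.
Arguments sum_gt_reindex {R m j}.


Lemma tri_pos (R : realFieldType) n (B : 'M[R]_n.+1) (c ell : 'I_n.+1 -> R) :
  (forall k l : 'I_n.+1, (k < l)%N -> B k l = 0) ->
  (forall k l, 0 <= B k l) -> (forall k, B k k = 1) ->
  (forall l, ell l = \sum_k c k * B k l) -> (forall i, 0 < ell i) ->
  (forall j : 'I_n.+1, (j < n)%N -> \sum_(k : 'I_n.+1 | (j < k)%N) B k j * ell k < ell j) ->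
  forall k, 0 <= c k.
Proof.
move=> Hlo Hnn Hd He Hp Hg.
have Ecj : forall j : 'I_n.+1, c j = ell j - \sum_(k : 'I_n.+1 | (j < k)%N) c k * B k j.
  move=> j; rewrite He (bigD1 j) //= Hd mulr1.
  suff E : \sum_(i < n.+1 | i != j) c i * B i j = \sum_(k < n.+1 | (j < k)%N) c k * B k j.
    by rewrite E addrK.
  rewrite big_mkcond [in RHS]big_mkcond /=; apply: (@eq_bigr _ _ _ (ordinal n.+1)) => k _.

  case: eqP => [->|/eqP Hkj]; first by rewrite ltnn.
  case: ltngtP => // Hkj'; first by rewrite Hlo ?mulr0.
  by move: Hkj; rewrite (val_inj Hkj') eqxx.
have HT : forall j : 'I_n.+1, \sum_(k : 'I_n.+1 | (j < k)%N) B k j * ell k < ell j.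
  move=> j; case: (ltnP j n) => Hjn; first exact: Hg.
  rewrite big1 ?Hp // => k Hk; have := ltn_ord k; lia.
suff: forall t (j : 'I_n.+1), (n - j <= t)%N -> 0 <= c j <= ell j.
  by move=> H k; case/andP: (H n k (leq_subr _ _)).
elim=> [|t IH] j Hj.
- rewrite Ecj; have -> : \sum_(k : 'I_n.+1 | (j < k)%N) c k * B k j = 0 by rewrite big1 // => k Hk; have := ltn_ord k; lia.
  by rewrite subr0 lexx andbT ltW.
- have IH' : forall k : 'I_n.+1, (j < k)%N -> 0 <= c k <= ell k.
    move=> k Hk; apply: IH; have := ltn_ord k; lia.
  have S0 : 0 <= \sum_(k : 'I_n.+1 | (j < k)%N) c k * B k j.
    apply: sumr_ge0 => k Hk; case/andP: (IH' k Hk) => H0 _; exact: mulr_ge0.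
  have S1 : \sum_(k : 'I_n.+1 | (j < k)%N) c k * B k j <= \sum_(k : 'I_n.+1 | (j < k)%N) B k j * ell k.
    apply: ler_sum => k Hk; case/andP: (IH' k Hk) => _ H1; rewrite mulrC; exact: ler_wpM2l.
  rewrite Ecj; have HTj := HT j; apply/andP; split.
    by rewrite subr_ge0; apply: ltW; apply: le_lt_trans HTj.
  by rewrite lerBlDr lerDl.
Qed.
Arguments tri_pos {R n B c ell}.

(* m1 = m.+1 (so m1 >= 1); indices are 0-based ordinals. *)
Theorem lemma2p3 (R : realType) (m m2 : nat)
  (F : 'I_m.+1 -> ('I_m.+1 -> R) -> R)
  (G : 'I_m.+1 -> ('I_m.+1 -> R) -> ('I_m2 -> R) -> R)
  (H : 'I_m2 -> ('I_m.+1 -> R) -> ('I_m2 -> R) -> R)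
  (A : 'M[R]_(m.+1 + m2)) (pO pM muM L2 : R) :
  admissible_mx A -> 0 <= L2 ->
  (forall (u : 'I_m.+1 -> R), (forall i, 0 <= u i) ->
     forall k : 'I_(m.+1 + m2),
       \sum_(l < m.+1) A k (lshift m2 l) * F l u <= L2 * (sumpow u pO + 1)) ->
  (forall (u : 'I_m.+1 -> R) (v : 'I_m2 -> R),
     (forall i, 0 <= u i) -> (forall j, 0 <= v j) ->
     forall k : 'I_m.+1,
       \sum_(l < m.+1) A (lshift m2 k) (lshift m2 l) * G l u v
         <= L2 * (sumpow u pM + sumpow v pM + 1)) ->
  (forall (u : 'I_m.+1 -> R) (v : 'I_m2 -> R),
     (forall i, 0 <= u i) -> (forall j, 0 <= v j) ->
     forall k : 'I_m2,
       \sum_(l < m.+1) A (rshift m.+1 k) (lshift m2 l) * G l u v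
       + \sum_(l < m2) A (rshift m.+1 k) (rshift m.+1 l) * H l u v
         <= L2 * (sumpow u muM + sumpow v muM + 1)) ->
  exists g : forall j : 'I_m, ('I_(m - j) -> R) -> R,
    (forall j : 'I_m, comp_incr (g j)) /\
    forall ell : 'I_m.+1 -> R,
      (forall i, 0 < ell i) ->
      (forall j : 'I_m,
         ell (widen_ord (leqnSn m) j) > g j (fun k : 'I_(m - j) => ell (inord (j.+1 + k)))) ->
      exists Lell : R, 0 < Lell /\
        (forall u : 'I_m.+1 -> R, (forall i, 0 <= u i) ->
           \sum_(i < m.+1) ell i * F i u <= Lell * (sumpow u pO + 1)) /\
        (forall (u : 'I_m.+1 -> R) (v : 'I_m2 -> R),
           (forall i, 0 <= u i) -> (forall j, 0 <= v j) ->
           \sum_(i < m.+1) ell i * G i u v <= Lell * (sumpow u pM + sumpow v pM + 1)).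
Proof.
move=> [Hlo [Hnn Hd]] HL2 HF HG _.
pose B : 'M[R]_m.+1 := \matrix_(k, l) A (lshift m2 k) (lshift m2 l).
have Blo : forall k l : 'I_m.+1, (k < l)%N -> B k l = 0.
  by move=> k l Hkl; rewrite mxE Hlo.
have Bnn : forall k l, 0 <= B k l by move=> k l; rewrite mxE.
have Bd : forall k, B k k = 1 by move=> k; rewrite mxE Hd.
have Bu : B \in unitmx.
  rewrite unitmxE det_trig; last by apply/is_trig_mxP => i j Hij; exact: Blo.
  by rewrite big1 ?unitr1.
exists (fun (j : 'I_m) (x : 'I_(m - j) -> R) =>
  \sum_(i < m - j) B (inord (j.+1 + i)) (widen_ord (leqnSn m) j) * x i).
split.
  move=> j x y Hxy; apply: ler_sum => i _; exact: ler_wpM2l.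
move=> ell Hp Hcond.
pose c := fun k => (\row_i ell i *m invmx B) 0 k.
have He : forall l, ell l = \sum_k c k * B k l.
  move=> l.
  have E1 : (\row_i ell i *m invmx B *m B) 0 l = \sum_k c k * B k l by rewrite mxE.
  have E2 : (\row_i ell i : 'rV_m.+1) 0 l = ell l by rewrite mxE.
  by rewrite -E2 -E1 mulmxKV.
have Hc : forall k, 0 <= c k.
  have T := tri_pos Blo Bnn Bd He Hp. apply: T => j Hj.
  have := Hcond (Ordinal Hj).
  have -> : widen_ord (leqnSn m) (Ordinal Hj) = j by apply: val_inj.
  by rewrite (sum_gt_reindex (fun k => B k j * ell k) Hj).
have sp : forall n (x : 'I_n -> R) p, 0 <= sumpow x p.
  by move=> n x p; apply: sumr_ge0 => i _; exact: powR_ge0.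
have Cge : 0 <= \sum_k c k by apply: sumr_ge0.
exists ((\sum_k c k) * L2 + 1); split.
  by rewrite ltr_wpDl ?mulr_ge0.
have fin : forall X, 0 <= X -> (\sum_k c k) * (L2 * X) <= ((\sum_k c k) * L2 + 1) * X.
  by move=> X HX; rewrite mulrDl mul1r mulrA lerDl.
split.
  move=> u Hu; apply: le_trans (fin _ _); last by rewrite addr_ge0.
  apply: (comb_bound He Hc) => k.
  under eq_bigr => l _ do rewrite /B mxE.
  exact: HF.
move=> u v Hu Hv; apply: le_trans (fin _ _); last by rewrite !addr_ge0.
apply: (comb_bound He Hc) => k.
under eq_bigr => l _ do rewrite /B mxE.
exact: HG.
Qed.
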